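(* There exists a countable subset $B\subseteq\mathbf{M}$ such that: (1) $\mathrm{gcl}(B)=\mathbf{M}$; (2) $B_0\leqslant\mathbf{M}$ for every finite $B_0\subseteq B$; (3) every permutation of $B$ extends to an automorphism of $\mathbf{M}$.
   Context: Fix $\mathfrak{m}\ge2$. Graphs, $\delta(A)=\mathfrak{m}|A|-|\mathcal{R}(A)|$ ($\mathcal{R}(A)$ the edge set), $A\leqslant B$ iff $\delta(A')\ge\delta(A)$ for all $A\subseteq A'\subseteq B$ (for infinite $N$: $A\leqslant B$ for all finite $B\subseteq N$ containing $A$). $\mathsf{K_0}$ = finite graphs all of whose subgraphs have $\delta\ge0$. $\mathbf{M}$ is the $(\mathsf{K_0},\leqslant)$-generic: unique countable graph that is a union of a chain of finite $\leqslant$-closed subsets, in which isomorphisms between finite $\leqslant$-closed subsets extend to automorphisms, and into which every member of $\mathsf{K_0}$ embeds $\leqslant$-closedly. $\mathrm{cl}(A)$ is the smallest finite $\leqslant$-closed subset of $\mathbf{M}$ containing finite $A$; $\mathrm{d}(A)=\delta(\mathrm{cl}(A))$; $\mathrm{d}(m/A)=\mathrm{d}(\{m\}\cup A)-\mathrm{d}(A)$; for any $X\subseteq\mathbf{M}$, $\mathrm{gcl}(X)=\{m\in\mathbf{M}:\mathrm{d}(m/A)=0$ for some finite $A\subseteq X\}$. *)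

(* Defs.v *)
(* Hrushovski's (K_0, <=)-generic graph for delta = m|A| - |R(A)|. *)
From mathcomp Require Import all_boot all_order all_algebra.
Set Implicit Arguments. Unset Strict Implicit. Unset Printing Implicit Defensive.
Import Order.TTheory GRing.Theory Num.Theory.
Local Open Scope ring_scope.

(* Number of edges of the subgraph induced on the (duplicate-free) list s,
   for a symmetric irreflexive relation E: unordered pairs {x,y} with E x y. *)
Fixpoint nedges (T : eqType) (E : rel T) (s : seq T) : nat :=
  match s with
  | [::] => 0%N
  | x :: t => (count (E x) t + nedges E t)%N
  end.

Definition delta (m : nat) (T : eqType) (E : rel T) (A : seq T) : int :=
  (m * size (undup A))%:Z - (nedges E (undup A))%:Z.

Definition sym_irrefl (T : eqType) (E : rel T) : Prop :=
  (forall x y, E x y = E y x) /\ (forall x, E x x = false).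

Definition leqs (m : nat) (T : eqType) (E : rel T) (A B : seq T) : Prop :=
  {subset A <= B} /\
  forall A' : seq T, {subset A <= A'} -> {subset A' <= B} ->
    delta m E A <= delta m E A'.

Definition closedM (m : nat) (T : eqType) (E : rel T) (A : seq T) : Prop :=
  forall B : seq T, {subset A <= B} -> leqs m E A B.

Definition inK0 (m : nat) (T : eqType) (E : rel T) (A : seq T) : Prop :=
  forall A' : seq T, {subset A' <= A} -> 0 <= delta m E A'.

Definition K0graph (m n : nat) (E : rel 'I_n) : Prop :=
  sym_irrefl E /\ forall A : seq 'I_n, 0 <= delta m E A.

Definition partial_iso (T : eqType) (E : rel T) (A A' : seq T) (g : T -> T) : Prop :=
  {in A &, injective g} /\
  (forall y, y \in A' <-> exists2 x, x \in A & g x = y) /\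
  {in A &, forall x y, E x y = E (g x) (g y)}.

Definition automorphism (T : eqType) (E : rel T) (s : T -> T) : Prop :=
  bijective s /\ forall x y, E x y = E (s x) (s y).

Definition is_generic (m : nat) (V : countType) (E : rel V) : Prop :=
  sym_irrefl E /\
  (exists ch : nat -> seq V,
      (forall n, {subset ch n <= ch n.+1}) /\
      (forall n, closedM m E (ch n) /\ inK0 m E (ch n)) /\
      (forall v, exists n, v \in ch n)) /\
  (forall (A A' : seq V) (g : V -> V),
      closedM m E A -> closedM m E A' -> partial_iso E A A' g ->
      exists2 s, automorphism E s & {in A, forall x, s x = g x}) /\
  (forall (n : nat) (En : rel 'I_n), K0graph m En ->
      exists h : 'I_n -> V,
        injective h /\ (forall i j, En i j = E (h i) (h j)) /\
        closedM m E (map h (enum 'I_n))).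

Definition is_cl (m : nat) (V : eqType) (E : rel V) (A C : seq V) : Prop :=
  {subset A <= C} /\ closedM m E C /\
  forall C' : seq V, {subset A <= C'} -> closedM m E C' -> {subset C <= C'}.

Definition dim_is (m : nat) (V : eqType) (E : rel V) (A : seq V) (k : int) : Prop :=
  exists2 C, is_cl m E A C & delta m E C = k.

Definition in_gcl (m : nat) (V : eqType) (E : rel V) (X : V -> Prop) (v : V) : Prop :=
  exists A : seq V, (forall x, x \in A -> X x) /\
    exists k k', [/\ dim_is m E A k, dim_is m E (v :: A) k' & k' - k = 0].

(* Main.v *)
Require Import Defs.
From mathcomp Require Import all_boot all_order all_algebra.
From HB Require Import structures.
From mathcomp Require Import finmap zify.
From Stdlib Require Import ClassicalEpsilon Classical.
Set Implicit Arguments. Unset Strict Implicit. Unset Printing Implicit Defensive.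
Import Order.TTheory GRing.Theory Num.Theory.
Local Open Scope fset_scope.

Section Gen.
Variables (T : choiceType) (E : rel T) (m : nat).

Definition eN (A : {fset T}) : nat := \sum_(x <- A) \sum_(y <- A) E x y.
Definition dl (A : {fset T}) : int := (((2 * m) * #|`A|)%N%:Z - (eN A)%:Z)%R.
Definition deg (A : {fset T}) x : nat := \sum_(y <- A) E x y.

Lemma eN_incl A W : A `<=` W ->
  eN A = \sum_(x <- W) \sum_(y <- W) [&& x \in A, y \in A & E x y].
Proof.
move=> sAW; rewrite /eN.
transitivity (\sum_(x <- A) \sum_(y <- W) [&& x \in A, y \in A & E x y]).
  apply: eq_fbigr => x xA _; symmetry; rewrite -(big_fset_incl _ sAW); last first.
    by move=> y _ yA; rewrite (negbTE yA) andbF.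
  by apply: eq_fbigr => y yA _; rewrite xA yA.
apply: big_fset_incl => // x _ xA; apply: big1 => y _; by rewrite (negbTE xA).
Qed.

Lemma eN_sub A B : A `<=` B -> (eN A <= eN B)%N.
Proof.
move=> sAB; rewrite (eN_incl sAB) (eN_incl (fsubset_refl B)).
apply: leq_sum => x _; apply: leq_sum => y _.
case xA: (x \in A); case yA: (y \in A); rewrite ?andbF //=.
by rewrite (fsubsetP sAB _ xA) (fsubsetP sAB _ yA).
Qed.

Lemma eN_submod A B : (eN A + eN B <= eN (A `|` B) + eN (A `&` B))%N.
Proof.
have sA : A `<=` A `|` B by apply: fsubsetUl.
have sB : B `<=` A `|` B by apply: fsubsetUr.
have sI : A `&` B `<=` A `|` B by apply: fsubset_trans (fsubsetIl _ _) sA.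
rewrite (eN_incl sA) (eN_incl sB) (eN_incl sI) (eN_incl (fsubset_refl _)).
rewrite -!big_split /=; apply: leq_sum => x _; rewrite -!big_split /=.
apply: leq_sum => y _; rewrite !inE.
by case: (x \in A); case: (x \in B); case: (y \in A); case: (y \in B); case: (E x y).
Qed.

Lemma dl_submod A B : (dl (A `|` B) + dl (A `&` B) <= dl A + dl B)%R.
Proof.
have := eN_submod A B; have := cardfsUI A B; rewrite /dl.
set a := #|` A|; set b := #|` B|; set u := #|` _ `|` _|; set i := #|` _ `&` _|.
move=> h1 h2; lia.
Qed.

Hypothesis Esym : forall x y, E x y = E y x.
Hypothesis Eirr : forall x, E x x = false.

Lemma eNU1 A x : x \notin A -> eN (x |` A) = (eN A + 2 * deg A x)%N.
Proof.
move=> xA; rewrite /eN big_fsetU1 // big_fsetU1 // Eirr /=.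
have -> : \sum_(i <- A) \sum_(y <- x |` A) E i y = \sum_(i <- A) (E i x + \sum_(y <- A) E i y)%N.
  by apply: eq_bigr => i _; rewrite big_fsetU1.
rewrite /deg.
rewrite big_split /=.
have -> : \sum_(i <- A) E i x = \sum_(y <- A) E x y by apply: eq_bigr => y _; rewrite Esym.
lia.
Qed.

Lemma dlU1 A x : x \notin A -> dl (x |` A) = (dl A + (2 * m)%N%:Z - (2 * deg A x)%N%:Z)%R.
Proof.
move=> xA; rewrite /dl eNU1 // cardfsU1 xA /=; lia.
Qed.

Lemma sum_count (P : pred T) t : \sum_(i <- t) (P i : nat) = count P t.
Proof. by elim: t => [|y t IH]; rewrite ?big_nil ?big_cons //= IH. Qed.

Lemma eS_nedges (s : seq T) :
  \sum_(x <- s) \sum_(y <- s) (E x y : nat) = (2 * nedges E s)%N.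
Proof.
elim: s => [|x t IH]; first by rewrite big_nil.
rewrite big_cons /= big_cons Eirr /=.
have -> : \sum_(j <- t) \sum_(y <- x :: t) (E j y : nat) = \sum_(j <- t) (E j x + \sum_(y <- t) E j y)%N.
  by apply: eq_bigr => j _; rewrite big_cons.
rewrite big_split /= IH.
have -> : \sum_(i <- t) E i x = count (E x) t.
  rewrite -sum_count; apply: eq_bigr => y _; by rewrite Esym.
have -> : \sum_(y <- t) (E x y : nat) = count (E x) t.
  by rewrite -sum_count.
lia.
Qed.

Lemma eN_nedges A : eN A = (2 * nedges E A)%N.
Proof. by rewrite /eN eS_nedges. Qed.

Lemma dl_even A : dl A = (((m * #|` A|)%N%:Z - (nedges E A)%:Z) * 2)%R.
Proof. rewrite /dl eN_nedges; lia. Qed.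

Lemma deg_count A x : deg A x = count (E x) A.
Proof. by rewrite /deg sum_count. Qed.

Lemma eN0 A x y : eN A = 0%N -> x \in A -> y \in A -> E x y = false.
Proof.
move=> h xA yA; apply/negP => Exy.
have : (0 < eN A)%N; last by rewrite h.
rewrite /eN (big_fsetD1 x) //= (big_fsetD1 y) //= Exy; lia.
Qed.

Definition fs (s : seq T) : {fset T} := [fset x | x in s].

Lemma in_fs s x : (x \in fs s) = (x \in s).
Proof. by rewrite /fs inE. Qed.

Lemma perm_fs s : perm_eq (undup s) (fs s).
Proof.
apply: uniq_perm; first exact: undup_uniq; first exact: fset_uniq.
by move=> x; rewrite mem_undup in_fs.
Qed.

Lemma delta_dl s : (delta m E s * 2 = dl (fs s))%R.
Proof.
rewrite /delta /dl.
have ps := perm_fs s.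
have -> : #|` fs s| = size (undup s) by rewrite (perm_size ps).
have -> : eN (fs s) = (2 * nedges E (undup s))%N.
  rewrite -eS_nedges /eN (perm_big _ ps) /=; apply: eq_bigr => x _.
  by rewrite (perm_big _ ps).
lia.
Qed.
End Gen.

Lemma dl_im (T1 T2 : choiceType) (E1 : rel T1) (E2 : rel T2) m (f : T1 -> T2) (A : {fset T1}) :
  {in A &, injective f} -> {in A &, forall x y, E2 (f x) (f y) = E1 x y} ->
  dl E2 m (f @` A) = dl E1 m A.
Proof.
move=> finj fE; rewrite /dl /eN card_in_imfset //= big_imfset //=.
congr (_ - (Posz _))%R; apply: eq_fbigr => x xA _; rewrite big_imfset //=.
by apply: eq_fbigr => y yA _; rewrite fE.
Qed.

Lemma ex_min_nat (P : nat -> Prop) : (exists n, P n) ->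
  exists n, P n /\ forall k, P k -> (n <= k)%N.
Proof.
move=> [n Pn]; apply: NNPP => H.
suff : forall j k, (k <= j)%N -> ~ P k by move/(_ n n (leqnn n)).
elim=> [|j IH] k.
  rewrite leqn0 => /eqP -> P0; apply: H; exists 0%N; split => //.
move=> hk Pk; apply: H; exists k; split => // k' Pk'.
rewrite leqNgt; apply/negP => lt; apply: (IH k') => //; lia.
Qed.

Section Main.
Variables (m : nat) (V : countType) (E : rel V).
Hypothesis hm : (2 <= m)%N.
Hypothesis hM : is_generic m E.

Local Notation dV := (dl E m).

Lemma Esym x y : E x y = E y x.
Proof. by case: hM => [[]]. Qed.
Lemma Eirr x : E x x = false.
Proof. by case: hM => [[]]. Qed.

Definition closedF (A : {fset V}) := forall X, A `<=` X -> (dV A <= dV X)%R.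

Lemma fs_fset (A : {fset V}) : fs A = A.
Proof. by apply/fsetP => x; rewrite in_fs. Qed.

Lemma sub_fs (s s' : seq V) : {subset s <= s'} <-> fs s `<=` fs s'.
Proof.
split=> [h|/fsubsetP h x xs]; first by apply/fsubsetP => x; rewrite !in_fs; apply: h.
by rewrite -in_fs; apply: h; rewrite in_fs.
Qed.

Lemma delta2 s : (delta m E s * 2 = dV (fs s))%R.
Proof. exact: delta_dl Esym Eirr s. Qed.

Lemma delta_le s s' : (delta m E s <= delta m E s')%R <-> (dV (fs s) <= dV (fs s'))%R.
Proof. rewrite -!delta2; lia. Qed.

Lemma closedM_F s : closedM m E s <-> closedF (fs s).
Proof.
split=> [h X sX|h B sB].
  have sX' : {subset s <= X} by move=> x xs; apply: (fsubsetP sX); rewrite in_fs.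
  have [_ H] := h X sX'.
  rewrite -[X in (_ <= dV X)%R]fs_fset; apply/delta_le; exact: H.
split=> // A' sA' _; apply/delta_le; apply: h; exact/sub_fs.
Qed.


Lemma chain_mono (ch : nat -> seq V) : (forall n, {subset ch n <= ch n.+1}) ->
  forall n k, (n <= k)%N -> {subset ch n <= ch k}.
Proof.
move=> h n; elim=> [|k IH]; first by rewrite leqn0 => /eqP ->.
rewrite leq_eqVlt => /orP [/eqP -> //| hk] x xn; apply: h; apply: IH => //.
Qed.

Lemma dl_ge0 (A : {fset V}) : (0 <= dV A)%R.
Proof.
case: hM => _ [[ch [hmono [hcl hall]]] _].
have [n hn] : exists n, {subset A <= ch n}.
  elim/fset1U_rect: A => [|x X _ [n hn]]; first by exists 0%N.
  have [k hk] := hall x.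
  exists (maxn n k) => y /fset1UP [->|yX].
    exact: (chain_mono hmono (leq_maxr n k)).
  by apply: (chain_mono hmono (leq_maxl n k)); apply: hn.
have [_ hK] := hcl n.
have := hK A hn; rewrite -[A in dV A]fs_fset -delta2; lia.
Qed.

Definition dval (A : {fset V}) (k : int) :=
  (forall X, A `<=` X -> (k <= dV X)%R) /\ exists2 X, A `<=` X & dV X = k.

Lemma dex A : exists k, dval A k.
Proof.
have h0 : exists n, exists2 X, A `<=` X & dV X = Posz n.
  exists `|dV A|%N, A => //; have := dl_ge0 A; lia.
have [n [[X sX hX] hmin]] := ex_min_nat h0.
exists (Posz n); split; last by exists X.
move=> Y sY; have := hmin `|dV Y|%N; have := dl_ge0 Y.
move=> h1 h2; have : (n <= `|dV Y|)%N by apply: h2; exists Y => //; lia.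
lia.
Qed.

Definition d A : int := proj1_sig (constructive_indefinite_description _ (dex A)).
Lemma dP A : dval A (d A).
Proof. exact: proj2_sig (constructive_indefinite_description _ (dex A)). Qed.

Lemma d_le A X : A `<=` X -> (d A <= dV X)%R.
Proof. by case: (dP A) => h _; apply: h. Qed.

Lemma d_mono A B : A `<=` B -> (d A <= d B)%R.
Proof.
move=> sAB; case: (dP B) => _ [X sX <-]; apply: d_le; exact: fsubset_trans sAB sX.
Qed.

Lemma minimizer_closed A X : A `<=` X -> dV X = d A -> closedF X.
Proof. move=> sX hX Y sY; rewrite hX; apply: d_le; exact: fsubset_trans sX sY. Qed.

Lemma closedF_d A : closedF A <-> d A = dV A.
Proof.
split=> [h|h X sX].
  case: (dP A) => h1 [X sX hX]; have := h1 A (fsubset_refl _); have := h X sX; lia.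
by rewrite -h; apply: d_le.
Qed.

Lemma dlI_le C X : closedF C -> (dV (X `&` C) <= dV X)%R.
Proof.
move=> hC; have := dl_submod E m X C; have := hC (X `|` C) (fsubsetUr _ _); lia.
Qed.

Lemma d_submod A B : (d (A `|` B) + d (A `&` B) <= d A + d B)%R.
Proof.
case: (dP A) => _ [XA sA <-]; case: (dP B) => _ [XB sB <-].
have := dl_submod E m XA XB.
have := d_le (fsetUSS sA sB); have := d_le (fsetISS sA sB); lia.
Qed.

Lemma dex_cl A : exists C, [/\ A `<=` C, closedF C, dV C = d A &
  forall C', A `<=` C' -> closedF C' -> C `<=` C'].
Proof.
have h0 : exists n, exists X, [/\ A `<=` X, dV X = d A & #|` X| = n].
  by case: (dP A) => _ [X sX hX]; exists #|` X|, X.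
have [n [[X [sX hX cX]] hmin]] := ex_min_nat h0.
exists X; split => //; first exact: minimizer_closed sX hX.
move=> C' sC' hC'.
have sI : A `<=` X `&` C' by apply/fsubsetIP.
have e1 : dV (X `&` C') = d A.
  have := dlI_le X hC'; have := d_le sI; lia.
have := hmin #|` X `&` C'| (ex_intro _ _ (And3 sI e1 erefl)).
have := fsubset_leq_card (fsubsetIl X C'); rewrite cX => h1 h2.
have eI : X `&` C' = X.
  by apply/eqP; rewrite eqEfcard fsubsetIl cX.
by apply/fsetIidPl.
Qed.


Lemma gcl_mono x A A' : d (x |` A) = d A -> A `<=` A' -> d (x |` A') = d A'.
Proof.
move=> h sA.
have := d_submod (x |` A) A'.
have -> : (x |` A) `|` A' = x |` A' by rewrite -fsetUA (fsetUidPr _ _ sA).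
have := d_mono (fsubsetU1 x A').
have : (d A <= d ((x |` A) `&` A'))%R.
  by apply: d_mono; apply/fsubsetIP; split => //; exact: fsubsetU1.
lia.
Qed.

Lemma gcl_set S A : (forall z, z \in S -> d (z |` A) = d A) -> d (S `|` A) = d A.
Proof.
elim/fset1U_rect: S => [|x S _ IH] h; first by rewrite fset0U.
have h' : forall z, z \in S -> d (z |` A) = d A.
  by move=> z zS; apply: h; rewrite !inE zS orbT.
rewrite -fsetUA.
rewrite (gcl_mono (h x (fset1U1 x S)) (fsubsetUr S A)).
exact: IH.
Qed.

Definition good G := closedF G /\ eN E G = 0%N.

Lemma good_sub G B0 : good G -> B0 `<=` G -> good B0.
Proof.
move=> [hc he] sB; have e0 : eN E B0 = 0%N by have := eN_sub E sB; lia.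
split=> // X sX.
have := dlI_le X hc.
have eI : eN E (X `&` G) = 0%N by have := eN_sub E (fsubsetIr X G); lia.
have sI : B0 `<=` X `&` G by apply/fsubsetIP.
have := fsubset_leq_card sI.
rewrite /dl eI e0; nia.
Qed.

Lemma good_d G : good G -> d G = Posz (2 * m * #|` G|)%N.
Proof. by move=> [hc he]; rewrite (proj1 (closedF_d G) hc) /dl he subr0. Qed.

Lemma dU1 A x : x \notin A ->
  dV (x |` A) = (dV A + Posz (2 * m)%N - Posz (2 * deg E A x)%N)%R.
Proof. by move=> h; rewrite (dlU1 m Esym Eirr h). Qed.


Lemma aut_dl s A : automorphism E s -> dV (s @` A) = dV A.
Proof.
move=> [[si hs _] hE]; apply: dl_im => [x y _ _ /(congr1 si)|x y _ _]; first by rewrite !hs.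
by rewrite -hE.
Qed.

Lemma aut_inv s : automorphism E s -> exists si, [/\ cancel s si, cancel si s & automorphism E si].
Proof.
move=> [[si h1 h2] hE]; exists si; split => //; split; first by exists s.
by move=> x y; rewrite (hE (si x)) !h2.
Qed.

Lemma aut_closed s A : automorphism E s -> closedF A -> closedF (s @` A).
Proof.
move=> hs hA X sX; have [si [h1 h2 hsi]] := aut_inv hs.
have sA : A `<=` si @` X.
  apply/fsubsetP => a aA; rewrite -(h1 a); apply: in_imfset => /=.
  by apply: (fsubsetP sX); apply: in_imfset.
rewrite aut_dl // -(aut_dl X hsi); exact: hA.
Qed.


Section EPsec.
Variables (C : {fset V}) (v : V).
Hypotheses (hC : closedF C) (vC : v \in C).

Let c : seq V := C.
Let n0 := size c.
Let mx : 'I_n0.+1 := ord_max.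
Let f0 (i : 'I_n0.+1) : V := nth v c i.
Let En (i j : 'I_n0.+1) : bool :=
  if i == mx then (j != mx) && (f0 j == v)
  else if j == mx then f0 i == v else E (f0 i) (f0 j).

Let uc : uniq c := fset_uniq C.

Let lt_mx (i : 'I_n0.+1) : i != mx -> (i < n0)%N.
Proof. move=> h; have := ltn_ord i; rewrite -(inj_eq val_inj) /= in h; lia. Qed.
 
Let F1 i : i != mx -> f0 i \in C.
Proof. by move=> h; rewrite /f0 mem_nth // lt_mx. Qed.

Let F2 i j : i != mx -> j != mx -> f0 i = f0 j -> i = j.
Proof.
move=> hi hj /eqP; rewrite /f0 nth_uniq ?lt_mx // => /eqP h; exact: val_inj.
Qed.


Let ordC y : y \in C -> exists j, j != mx /\ f0 j = y.
Proof.
move=> yC.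
have yc : y \in c by [].
have hi : (index y c < n0)%N by rewrite index_mem.
have hi' : (index y c < n0.+1)%N by apply: ltnW.
exists (Ordinal hi'); split; last by rewrite /f0 /= nth_index.
by rewrite -(inj_eq val_inj) /=; apply/eqP => e; move: hi; rewrite e ltnn.
Qed.

Let F4 i j : i != mx -> j != mx -> (f0 i == f0 j) = (i == j).
Proof.
move=> hi hj; apply/eqP/eqP => [|->] //; exact: F2.
Qed.

Let Esymn i j : En i j = En j i.
Proof.
by rewrite /En; have [ei|hi] := eqVneq i mx; have [ej|hj] := eqVneq j mx; rewrite //= Esym.
Qed.

Let Eirrn i : En i i = false.
Proof. by rewrite /En; have [ei|hi] := eqVneq i mx; rewrite //= Eirr. Qed.

Let F6 (S : {fset 'I_n0.+1}) : mx \notin S -> dl En m S = dV (f0 @` S).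
Proof.
move=> hS; symmetry; apply: dl_im => [i j iS jS|i j iS jS].
  by apply: F2; apply: contraNneq hS => <-.
have hi : i != mx by apply: contraNneq hS => <-.
have hj : j != mx by apply: contraNneq hS => <-.
by rewrite /En (negbTE hi) (negbTE hj).
Qed.

Let F7 (S : {fset 'I_n0.+1}) : mx \notin S -> (deg En S mx <= 1)%N.
Proof.
move=> hS; have [j0 [hj0 fj0]] := ordC vC.
have -> : deg En S mx = \sum_(j <- S) ((j == j0) : nat).
  rewrite /deg; apply: eq_fbigr => j jS _; have hj : j != mx by apply: contraNneq hS => <-.
  by rewrite /En eqxx hj /= -fj0 F4.
rewrite (sum_count (pred1 j0)) count_uniq_mem ?fset_uniq //; by case: (j0 \in S).
Qed.

Let K0 : K0graph m En.
Proof.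
split; first by split; [exact: Esymn | exact: Eirrn].
move=> A; have := delta_dl m Esymn Eirrn A; set S := fs A.
suff : (0 <= dl En m S)%R by move=> h1 h2; move: h1; rewrite -h2; set t := delta m En A; move: t => t h; lia.
case: (boolP (mx \in S)) => hS; last by rewrite F6 // dl_ge0.
rewrite -(fsetD1K hS) dlU1 //; last by rewrite in_fsetD1 eqxx.
have h1 := F7 (_ : mx \notin S `\ mx).
rewrite F6; last by rewrite in_fsetD1 eqxx.
have := dl_ge0 (f0 @` (S `\ mx)); have := h1 ltac:(by rewrite in_fsetD1 eqxx).
set a := dV _; set k := deg _ _ _; move=> *; lia.
Qed.


Lemma EP : exists b, [/\ b \notin C, (forall x, x \in C -> E b x = (x == v)) &
  closedF (b |` C)].
Proof.
case: hM => _ [_ [hhom huniv]].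
have [h [hinj [hE hcl]]] := huniv n0.+1 En K0.
set Dt := fs (map h (enum 'I_n0.+1)).
have hDt : closedF Dt by apply/closedM_F.
have mDt y : y \in Dt -> exists i, y = h i.
  by rewrite in_fs => /mapP [i _ ->]; exists i.
have hDi i : h i \in Dt by rewrite in_fs map_f // mem_enum.
set N := fs [seq i <- enum 'I_n0.+1 | i != mx].
have mN i : (i \in N) = (i != mx) by rewrite in_fs mem_filter mem_enum andbT.
set Ct := h @` N.
have hinj' : {in N &, injective h} by move=> i j _ _; apply: hinj.
have mCt i : (h i \in Ct) = (i != mx) by rewrite mem_imfset // mN.
have mCt' y : y \in Ct -> exists2 i, i != mx & y = h i.
  by move=> /imfsetP [i iN ->]; exists i; rewrite -?mN.
have degC : deg E Ct (h mx) = deg En N mx.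
  rewrite /deg big_imfset //=; apply: eq_bigr => i _; by rewrite hE.
have hCt : closedF Ct.
  move=> X sX; have := dlI_le X hDt.
  have hmx : h mx \notin Ct by rewrite mCt eqxx.
  case: (boolP (h mx \in X)) => hX.
    have -> : X `&` Dt = h mx |` Ct.
      apply/fsetP => y; apply/fsetIP/fset1UP => [[yX /mDt [i ->]]|[->|yC]].
      - by have [->|hi] := eqVneq i mx; [left | right; rewrite mCt].
      - by split.
      - split; first exact: (fsubsetP sX).
        by have [i _ ->] := mCt' _ yC.
    rewrite dU1 // degC.
    have := F7 (_ : mx \notin N); rewrite mN eqxx => /(_ isT).
    set a := dV _; set k := deg _ _ _; move=> *; lia.
  have -> : X `&` Dt = Ct.
    apply/fsetP => y; apply/fsetIP/idP => [[yX /mDt [i ey]]|yC].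
    - by rewrite ey mCt; apply: contraNneq hX => <-; rewrite -ey.
    - split; first exact: (fsubsetP sX).
      by have [i _ ->] := mCt' _ yC.
  by [].
pose g y := if [pick i | (i != mx) && (h i == y)] is Some i then f0 i else y.
have gh i : i != mx -> g (h i) = f0 i.
  move=> hi; rewrite /g; case: pickP => [i' /andP [_ /eqP /hinj -> //]|H].
  by have := H i; rewrite hi eqxx.
have piso : partial_iso E Ct c g.
  split; [|split].
  - move=> x1 x2 /mCt' [i1 h1 ->] /mCt' [i2 h2 ->]; rewrite !gh // => /F2 -> //.
  - move=> y; split => [yc|[x /mCt' [i hi ->] <-]]; last by rewrite gh //; exact: F1.
    have [j [hj <-]] := ordC yc.
    by exists (h j); [rewrite mCt | rewrite gh].
  - move=> x1 x2 /mCt' [i1 h1 ->] /mCt' [i2 h2 ->]; rewrite !gh // -hE.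
    by rewrite /En (negbTE h1) (negbTE h2).
have cCt : closedM m E Ct by apply/closedM_F; rewrite fs_fset.
have cc : closedM m E c by apply/closedM_F; rewrite /c fs_fset.
have [s hs sg] := hhom Ct c g cCt cc piso.
have sh i : i != mx -> s (h i) = f0 i.
  by move=> hi; rewrite sg ?gh //; rewrite mCt.
have sinj : injective s by case: hs => /bij_inj.
exists (s (h mx)); split.
- apply/negP => /ordC [j [hj ej]].
  by move: ej; rewrite -sh // => /sinj /hinj ejm; move: hj; rewrite ejm eqxx.
- move=> x /ordC [j [hj <-]]; rewrite -[X in E _ X](sh j hj) -hs.2.
  by rewrite -hE /En eqxx hj.
have -> : s (h mx) |` C = s @` Dt.
  apply/fsetP => y; apply/fset1UP/imfsetP => [[->|/ordC [j [hj <-]]]|[z /mDt [i ->] ->]].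
  - by exists (h mx) => //; exact: hDi.
  - by exists (h j); [exact: hDi | rewrite sh].
  - have [->|hi] := eqVneq i mx; first by left.
    by right; rewrite sh //; exact: F1.
exact: aut_closed.
Qed.

End EPsec.


Lemma deg_one (S : {fset V}) b u : (forall y, y \in S -> E b y = (y == u)) ->
  deg E S b = (u \in S).
Proof.
move=> h; rewrite deg_count (@eq_in_count _ _ (pred1 u)); last by move=> y /h.
by rewrite count_uniq_mem // fset_uniq.
Qed.

Lemma d_even A : exists z : int, d A = (z * 2)%R.
Proof.
case: (dP A) => _ [X _ <-]; rewrite (dl_even m Esym Eirr X).
by eexists.
Qed.

Lemma stage_dec B0 v : good B0 -> (0 < d (v |` B0) - d B0)%R ->
  exists b, [/\ b \notin B0, good (b |` B0) &
    (d (v |` (b |` B0)) - d (b |` B0) <= d (v |` B0) - d B0 - 2)%R].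
Proof.
move=> [hB0c hB0e] hpos.
have dB0 : d B0 = dV B0 by apply/closedF_d.
have vB0 : v \notin B0.
  apply: contraTN hpos => vB; rewrite (fsetUidPr _ _ _ : [fset v] `|` B0 = B0) ?subrr //.
  by rewrite fsub1set.
have [C [sC hCc dC _]] := dex_cl (v |` B0).
have vC : v \in C by apply: (fsubsetP sC); exact: fset1U1.
have sB0C : B0 `<=` C by apply: fsubset_trans sC; exact: fsubsetU1.
have [b [bC hbE hbC]] := EP hCc vC.
have bB0 : b \notin B0 by apply: contra bC; apply: (fsubsetP sB0C).
have degB0 : deg E B0 b = 0%N.
  rewrite (deg_one (u := v)) ?(negbTE vB0) // => y yB; exact: hbE (fsubsetP sB0C _ yB).
have [z hz] := d_even (v |` B0); have [z' hz'] := d_even B0.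
have ev : (d (v |` B0) - d B0 >= 2)%R.
  move: hpos; rewrite hz hz'; lia.
have dbB0 : dV (b |` B0) = (dV B0 + Posz (2 * m)%N)%R by rewrite dU1 // degB0 subr0.
have gb : good (b |` B0).
  split; last by rewrite (eNU1 Esym Eirr bB0) hB0e degB0.
  move=> X sX; have := dlI_le X hbC.
  have bX : b \in X by apply: (fsubsetP sX); exact: fset1U1.
  have -> : X `&` (b |` C) = b |` (X `&` C).
    apply/fsetP => y; rewrite !inE; case: (y =P b) => [->|]; by rewrite ?bX ?andbT ?orbF.
  have bXC : b \notin X `&` C by rewrite inE negb_and bC orbT.
  rewrite dU1 // (deg_one (u := v)); last by move=> y /fsetIP [_ /hbE].
  have sB0X : B0 `<=` X `&` C.
    apply/fsubsetIP; split => //; apply: fsubset_trans sX; exact: fsubsetU1.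
  have h1 := hB0c _ sB0X.
  case: (boolP (v \in X `&` C)) => vXC.
    have h2 : (d (v |` B0) <= dV (X `&` C))%R.
      by apply: d_le; apply/fsubUsetP; split => //; rewrite fsub1set.
    move: h1 h2 ev; rewrite dbB0 dB0.
    set a := dV B0; set a' := dV (X `&` C); set e := d _; set f := dV X.
    move=> *; lia.
  move: h1; rewrite dbB0.
  set a := dV B0; set a' := dV (X `&` C); set f := dV X.
  move=> *; lia.
exists b; split => //.
have h1 : (d (v |` (b |` B0)) <= dV (b |` C))%R.
  apply: d_le; apply/fsubsetP => y; rewrite !inE => /or3P [/eqP ->|/eqP ->|yB].
  - by rewrite vC orbT.
  - by rewrite eqxx.
  - by rewrite (fsubsetP sB0C _ yB) orbT.
move: h1; rewrite dU1 // (deg_one (u := v)) // vC.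
have -> : d (b |` B0) = dV (b |` B0) by apply/closedF_d; case: gb.
rewrite dbB0 -dC dB0.
set a := dV B0; set e := d (v |` (b |` B0)); set f := dV C.
move=> *; lia.
Qed.

Lemma stage B0 v : good B0 -> exists B1, [/\ B0 `<=` B1, good B1 & d (v |` B1) = d B1].
Proof.
suff H : forall k B0, good B0 -> (d (v |` B0) - d B0 <= Posz k)%R ->
  exists B1, [/\ B0 `<=` B1, good B1 & d (v |` B1) = d B1].
  move=> g; have h0 := d_mono (fsubsetUr [fset v] B0).
  apply: (H `|d (v |` B0) - d B0|%N) => //; move: h0.
  set a := d (v |` B0); set a' := d B0; move=> *; lia.
elim=> [|k IH] {}B0 g hk.
  exists B0; split => //; have := d_mono (fsubsetUr [fset v] B0).
  move: hk; set a := d _; set a' := d _; move=> *; lia.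
have := d_mono (fsubsetUr [fset v] B0).
case: (boolP (0 < d (v |` B0) - d B0)%R) => hp hm0; last first.
  exists B0; split => //; move: hp hm0; set a := d _; set a' := d _; move=> *; lia.
have [b [bB0 gb hdec]] := stage_dec g hp.
have [B1 [s1 g1 e1]] := IH (b |` B0) gb ltac:(move: hdec hk; set a := d (v |` (b |` B0)); set a' := d (b |` B0); set e := d (v |` B0); set f := d B0; move=> *; lia).
exists B1; split => //; apply: fsubset_trans s1; exact: fsubsetU1.
Qed.

Section WithB.
Variable Bp : V -> Prop.
Hypothesis hB : forall B0 : {fset V}, (forall z, z \in B0 -> Bp z) -> good B0.

Section KeyL.
Variables (Z B0 : {fset V}).
Hypotheses (sBZ : B0 `<=` Z) (hB0 : forall z, z \in B0 -> Bp z)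
  (hZ : (dV Z <= Posz (2 * m * #|` B0|)%N)%R).

Lemma keyA z : z \in Z -> Bp z -> z \in B0.
Proof.
move=> zZ Bz; apply: NNPP => /negP zB.
have g : good (z |` B0) by apply: hB => y /fset1UP [->|/hB0] //.
have := good_d g; rewrite cardfsU1 zB /=.
have := d_mono (_ : z |` B0 `<=` Z); have := d_le (fsubset_refl Z).
move=> h1 h2 h3; have := h2 ltac:(by apply/fsubUsetP; split => //; rewrite fsub1set).
move: h3 (hZ); rewrite add1n mulnS; set k := #|` B0|; set a := d Z; set b := dV Z; set c := d (z |` B0) => h3 hZ2. lia.
Qed.

Lemma keyB x z : x \in Z -> Bp z -> z \notin Z -> E x z = false.
Proof.
move=> xZ Bz zZ.
have zB : z \notin B0 by apply: contra zZ; apply: (fsubsetP sBZ).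
have g : good (z |` B0) by apply: hB => y /fset1UP [->|/hB0] //.
have := good_d g; rewrite cardfsU1 zB /=.
have := d_mono (fsetUS [fset z] sBZ); have := d_le (fsubset_refl (z |` Z)).
rewrite dU1 // => h1 h2 h3.
have hd : deg E Z z = 0%N.
  move: h1 h2 h3 (hZ); rewrite add1n mulnS.
  set k := #|` B0|; set a := d _; set b := dV Z; set c := d _; set e := deg E Z z.
  move=> h1 h2 h3 h4; lia.
rewrite Esym; apply/negP => Ezx; move: hd.
by rewrite /deg (big_fsetD1 x) //= Ezx.
Qed.

Lemma keyC B1 : (forall z, z \in B1 -> Bp z) -> closedF (Z `|` B1).
Proof.
move=> hB1 X sX.
have g : good (B0 `|` B1) by apply: hB => y /fsetUP [/hB0|/hB1].
have h1 := good_d g.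
have h2 := d_mono (fsetSU B1 sBZ).
have h3 := d_le sX.
have h4 := eN_sub E (fsubsetUl Z B1).
have h5 : B0 `&` B1 `<=` Z `&` B1 by apply: fsetSI.
have h6 := fsubset_leq_card h5.
have h7 := cardfsUI Z B1; have h8 := cardfsUI B0 B1.
have hc : (#|` Z `|` B1| + #|` B0| <= #|` B0 `|` B1| + #|` Z|)%N.
  move: h6 h7 h8.
  set k1 := #|` Z `|` B1|; set k2 := #|` B0|; set k3 := #|` B0 `|` B1|; set k4 := #|` Z|.
  set k5 := #|` Z `&` B1|; set k6 := #|` B0 `&` B1|; set k7 := #|` B1|.
  move=> *; lia.
have := leq_mul (leqnn (2 * m)) hc; rewrite !mulnDr.
move: h1 h2 h3 h4 (hZ); rewrite /dl.
set k1 := #|` Z `|` B1|; set k2 := #|` B0|; set k3 := #|` B0 `|` B1|; set k4 := #|` Z|.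
set a := d (B0 `|` B1); set b := d (Z `|` B1); set c := eN E Z; set e := eN E (Z `|` B1).
move=> g1 g2 g3 g4 g5 g6; lia.
Qed.
End KeyL.


Hypothesis hG : forall z, exists A : {fset V}, (forall y, y \in A -> Bp y) /\ d (z |` A) = d A.

Lemma Bp_noE x y : Bp x -> Bp y -> E x y = false.
Proof.
move=> bx by_.
have [_ he] : good [fset x; y] by apply: hB => z; rewrite !inE => /orP [/eqP ->|/eqP ->].
by apply: (eN0 he); rewrite !inE eqxx ?orbT.
Qed.

Lemma gcl_fin (S : {fset V}) : exists B0 : {fset V},
  (forall y, y \in B0 -> Bp y) /\ forall z, z \in S -> d (z |` B0) = d B0.
Proof.
elim/fset1U_rect: S => [|x S _ [B0 [hB0 hw]]]; first by exists fset0.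
have [A [hA eA]] := hG x.
exists (A `|` B0); split; first by move=> y /fsetUP [/hA|/hB0].
move=> z /fset1UP [->|zS]; first exact: gcl_mono eA (fsubsetUl _ _).
exact: gcl_mono (hw z zS) (fsubsetUr _ _).
Qed.


Record Inv (p q : V -> V) (X : {fset V}) (f : V -> V) (Y : {fset V}) (g : V -> V) : Prop := MkInv {
  iv1 : forall x, x \in X -> f x \in Y /\ g (f x) = x;
  iv2 : forall y, y \in Y -> g y \in X /\ f (g y) = y;
  iv3 : forall x, x \in X -> Bp x -> f x = p x;
  iv4 : forall y, y \in Y -> Bp y -> g y = q y;
  iv5 : forall x z, x \in X -> z \in X -> E (f x) (f z) = E x z;
  iv6 : forall x z, x \in X -> Bp z -> E (f x) (p z) = E x z;
  iv7 : forall y z, y \in Y -> Bp z -> E (g y) (q z) = E y z;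
  iv8 : forall B1 : {fset V}, (forall z, z \in B1 -> Bp z) -> closedF (X `|` B1);
  iv9 : forall B1 : {fset V}, (forall z, z \in B1 -> Bp z) -> closedF (Y `|` B1) }.

Lemma Inv_swap p q X f Y g : Inv p q X f Y g -> Inv q p Y g X f.
Proof.
case=> h1 h2 h3 h4 h5 h6 h7 h8 h9; split => //.
move=> y z yY zY; have [gy fgy] := h2 y yY; have [gz fgz] := h2 z zY.
by rewrite -h5 // fgy fgz.
Qed.

Section Perm.
Variables p q : V -> V.
Hypotheses (hp : forall x, Bp x -> Bp (p x)) (hq : forall x, Bp x -> Bp (q x))
  (qp : forall x, Bp x -> q (p x) = x) (pq : forall x, Bp x -> p (q x) = x).

Lemma forth X f Y g x0 : Inv p q X f Y g -> exists X' f' Y' g',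
  [/\ Inv p q X' f' Y' g', x0 \in X', X `<=` X', Y `<=` Y' &
     {in X, f' =1 f} /\ {in Y, g' =1 g}].
Proof.
move=> iv; case: (iv) => h1 h2 h3 h4 h5 h6 h7 h8 h9.
have [B0 [hB0 hw]] := gcl_fin (x0 |` X).
set W := (x0 |` X) `|` B0.
have dW : d W = d B0 by apply: gcl_set.
have gB0 : good B0 by apply: hB.
have [C [sWC hCc dCW _]] := dex_cl W.
have sB0C : B0 `<=` C by apply: fsubset_trans sWC; exact: fsubsetUr.
have sXC : x0 |` X `<=` C by apply: fsubset_trans sWC; exact: fsubsetUl.
have hZ : (dV C <= Posz (2 * m * #|` B0|)%N)%R by rewrite dCW dW good_d.
have pinj : {in B0 &, injective p}.
  by move=> a b aB bB e; rewrite -(qp (hB0 a aB)) e qp //; apply: hB0.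
set A := X `|` B0.
pose F z := if z \in X then f z else p z.
set A' := Y `|` p @` B0.
have hpB0 : forall y, y \in p @` B0 -> Bp y by move=> y /imfsetP [b bB ->]; apply/hp/hB0.
have cA : closedM m E A by apply/closedM_F; rewrite fs_fset; exact: h8.
have cA' : closedM m E A' by apply/closedM_F; rewrite fs_fset; exact: h9.
have FB z : z \in B0 -> F z = p z.
  by move=> zB; rewrite /F; case: ifP => // zX; apply: h3 => //; apply: hB0.
have piso : partial_iso E A A' F.
  split; [|split].
  - move=> z1 z2 /fsetUP hz1 /fsetUP hz2.
    case: (boolP (z1 \in X)) => z1X; case: (boolP (z2 \in X)) => z2X.
    + rewrite /F z1X z2X => e; by rewrite -(h1 _ z1X).2 e (h1 _ z2X).2.
    + have z2B : z2 \in B0 by case: hz2 => //; rewrite (negbTE z2X).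
      rewrite /F z1X (negbTE z2X) => e.
      have Bz2 : Bp z2 := hB0 _ z2B.
      have pY : p z2 \in Y by rewrite -e; exact: (h1 _ z1X).1.
      by rewrite -(h1 _ z1X).2 e h4 ?qp //; apply: hp.
    + have z1B : z1 \in B0 by case: hz1 => //; rewrite (negbTE z1X).
      rewrite /F z2X (negbTE z1X) => e.
      have Bz1 : Bp z1 := hB0 _ z1B.
      have pY : p z1 \in Y by rewrite e; exact: (h1 _ z2X).1.
      by rewrite -(h1 _ z2X).2 -e h4 ?qp //; apply: hp.
    + have z1B : z1 \in B0 by case: hz1 => //; rewrite (negbTE z1X).
      have z2B : z2 \in B0 by case: hz2 => //; rewrite (negbTE z2X).
      by rewrite /F (negbTE z1X) (negbTE z2X); apply: pinj.
  - move=> y; split.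
      move=> /fsetUP [yY|/imfsetP [b bB ->]].
        have [gX fgy] := h2 y yY; exists (g y); first by rewrite inE gX.
        by rewrite /F gX.
      by exists b; [rewrite inE bB orbT | apply: FB].
    move=> [z /fsetUP [zX|zB] <-]; rewrite /F.
      by rewrite zX inE (h1 _ zX).1.
    case: ifP => zX; first by rewrite inE (h1 _ zX).1.
    by rewrite inE in_imfset ?orbT.
  - move=> z1 z2 /fsetUP hz1 /fsetUP hz2.
    case: (boolP (z1 \in X)) => z1X; case: (boolP (z2 \in X)) => z2X.
    + by rewrite /F z1X z2X h5.
    + have z2B : z2 \in B0 by case: hz2 => //; rewrite (negbTE z2X).
      by rewrite /F z1X (negbTE z2X) h6 //; apply: hB0.
    + have z1B : z1 \in B0 by case: hz1 => //; rewrite (negbTE z1X).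
      rewrite /F z2X (negbTE z1X) [E (p z1) _]Esym h6 //; [exact: Esym | exact: hB0].
    + have z1B : z1 \in B0 by case: hz1 => //; rewrite (negbTE z1X).
      have z2B : z2 \in B0 by case: hz2 => //; rewrite (negbTE z2X).
      rewrite /F (negbTE z1X) (negbTE z2X) !Bp_noE //; try apply: hp; exact: hB0.
case: hM => _ [_ [hhom _]].
have [s hs sF] := hhom A A' F cA cA' piso.
have [si [c1 c2 hsi]] := aut_inv hs.
have sX : {in X, s =1 f}.
  by move=> x xX; rewrite sF /F ?xX // inE xX.
have sB : {in B0, s =1 p}.
  by move=> b bB; rewrite sF ?FB // inE bB orbT.
have sEs x y : E (s x) (s y) = E x y by rewrite -hs.2.
have siE x y : E (si x) (si y) = E x y by rewrite -hsi.2.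
set Y' := s @` C.
have cardp : #|` p @` B0| = #|` B0| by rewrite card_in_imfset.
have hZ' : (dV Y' <= Posz (2 * m * #|` p @` B0|)%N)%R by rewrite aut_dl // cardp.
have spB0 : p @` B0 `<=` Y'.
  apply/fsubsetP => y /imfsetP [b bB ->]; rewrite -(sB b bB); apply: in_imfset.
  exact: (fsubsetP sB0C).
have kA := keyA sB0C hB0 hZ.
have kB := keyB sB0C hB0 hZ.
have kC := keyC sB0C hB0 hZ.
have kA' := keyA spB0 hpB0 hZ'.
have kB' := keyB spB0 hpB0 hZ'.
have kC' := keyC spB0 hpB0 hZ'.
have msY x : x \in C -> s x \in Y' by move=> xC; apply: in_imfset.
have mY y : y \in Y' -> exists2 x, x \in C & y = s x by move=> /imfsetP [x xC ->]; exists x.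
exists C, s, Y', si; split.
- split.
  + by move=> x xC; split; [exact: msY | exact: c1].
  + by move=> y /mY [x xC ->]; rewrite c1.
  + by move=> x xC Bx; apply: sB; apply: kA.
  + move=> y /mY [x xC ->] By.
    have /imfsetP [b bB eb] := kA' _ (msY _ xC) By.
    by rewrite eb (qp (hB0 _ bB)) -(sB b bB) c1.
  + by move=> x z _ _; apply: sEs.
  + move=> x z xC Bz; case: (boolP (z \in C)) => zC.
      by rewrite -(sB z (kA z zC Bz)) sEs.
    have pzY : p z \notin Y'.
      apply/negP => /(kA' _) /(_ (hp Bz)) /imfsetP [b bB eb].
      have ezb : z = b by rewrite -(qp Bz) eb qp //; apply: hB0.
      by move: zC; rewrite ezb (fsubsetP sB0C _ bB).
    by rewrite (kB x z xC Bz zC) (kB' (s x) (p z) (msY _ xC) (hp Bz) pzY).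
  + move=> y z yY Bz; case: (boolP (z \in Y')) => zY.
      have /imfsetP [b bB eb] := kA' _ zY Bz.
      have -> : q z = si z by rewrite eb (qp (hB0 _ bB)) -(sB b bB) c1.
      by rewrite siE.
    have qzC : q z \notin C.
      apply/negP => qzC; have qB : q z \in B0 by apply: kA => //; apply: hq.
      by move: zY; rewrite -(pq Bz) -(sB _ qB) (msY _ qzC).
    have [x xC ey] := mY y yY.
    by rewrite (kB' y z yY Bz zY) ey c1 (kB x (q z) xC (hq Bz) qzC).
  + exact: kC.
  + exact: kC'.
- by apply: (fsubsetP sXC); exact: fset1U1.
- by apply: fsubset_trans sXC; exact: fsubsetU1.
- apply/fsubsetP => y yY; have [gX fgy] := h2 y yY.
  by rewrite -fgy -sX //; apply: msY; apply: (fsubsetP sXC); rewrite inE gX orbT.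
- split => //; move=> y yY; have [gX fgy] := h2 y yY.
  by rewrite -{1}fgy -sX // c1.
Qed.

End Perm.

Section Perm2.
Variables p q : V -> V.
Hypotheses (hp : forall x, Bp x -> Bp (p x)) (hq : forall x, Bp x -> Bp (q x))
  (qp : forall x, Bp x -> q (p x) = x) (pq : forall x, Bp x -> p (q x) = x).

Definition St := (({fset V} * (V -> V)) * ({fset V} * (V -> V)))%type.
Definition InvS (st : St) := Inv p q st.1.1 st.1.2 st.2.1 st.2.2.
Definition extS (st st' : St) :=
  [/\ st.1.1 `<=` st'.1.1, st.2.1 `<=` st'.2.1,
      {in st.1.1, st'.1.2 =1 st.1.2} & {in st.2.1, st'.2.2 =1 st.2.2}].

Lemma extS_refl st : extS st st.
Proof. by split. Qed.

Lemma extS_trans st1 st2 st3 : extS st1 st2 -> extS st2 st3 -> extS st1 st3.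
Proof.
move=> [a1 b1 c1 d1] [a2 b2 c2 d2]; split.
- exact: fsubset_trans a2.
- exact: fsubset_trans b2.
- by move=> x xX; rewrite c2 ?c1 //; apply: (fsubsetP a1).
- by move=> x xX; rewrite d2 ?d1 //; apply: (fsubsetP b1).
Qed.

Lemma bf_ex (st : St) (o : option V) : exists st' : St, InvS st ->
  [/\ InvS st', (forall x, o = Some x -> x \in st'.1.1 /\ x \in st'.2.1) & extS st st'].
Proof.
case: o => [x0|]; last by exists st => h; split => //; exact: extS_refl.
case: st => [[X f] [Y g]].
case: (classic (InvS ((X, f), (Y, g)))) => hI; last by exists ((X, f), (Y, g)).
have [X1 [f1 [Y1 [g1 [i1 x1 sX1 sY1 [e1 e1']]]]]] := forth hp hq qp pq x0 hI.
have [Y2 [g2 [X2 [f2 [i2 x2 sY2 sX2 [e2 e2']]]]]] :=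
  forth hq hp pq qp x0 (Inv_swap i1).
exists ((X2, f2), (Y2, g2)) => _; split.
- exact: Inv_swap i2.
- by move=> x [<-]; split => //=; apply: (fsubsetP sX2).
- split => /=.
  + exact: fsubset_trans sX1 sX2.
  + exact: fsubset_trans sY1 sY2.
  + by move=> x xX; rewrite e2' ?e1 //; apply: (fsubsetP sX1).
  + by move=> y yY; rewrite e2 ?e1' //; apply: (fsubsetP sY1).
Qed.

Definition bstep (st : St) (o : option V) : St :=
  proj1_sig (constructive_indefinite_description _ (bf_ex st o)).

Lemma bstepP st o : InvS st ->
  [/\ InvS (bstep st o), (forall x, o = Some x -> x \in (bstep st o).1.1 /\ x \in (bstep st o).2.1)
    & extS st (bstep st o)].
Proof. exact: proj2_sig (constructive_indefinite_description _ (bf_ex st o)). Qed.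

Definition init : St := ((fset0, id), (fset0, id)).

Fixpoint seqS n : St := if n is n'.+1 then bstep (seqS n') (choice.unpickle n') else init.

Lemma Inv_init : InvS init.
Proof.
split => //= B1 hB1; rewrite fset0U; by case: (hB hB1).
Qed.

Lemma Inv_seq n : InvS (seqS n).
Proof. elim: n => [|n IH] /=; [exact: Inv_init | by case: (bstepP (choice.unpickle n) IH)]. Qed.

Lemma ext_seq n k : (n <= k)%N -> extS (seqS n) (seqS k).
Proof.
elim: k => [|k IH]; first by rewrite leqn0 => /eqP ->; exact: extS_refl.
rewrite leq_eqVlt => /orP [/eqP ->|]; first exact: extS_refl.
rewrite ltnS => /IH h; apply: extS_trans h _ => /=.
by case: (bstepP (choice.unpickle k) (Inv_seq k)).
Qed.

Lemma mem_seq x : x \in (seqS (choice.pickle x).+1).1.1 /\ x \in (seqS (choice.pickle x).+1).2.1.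
Proof.
rewrite /=; case: (bstepP (choice.unpickle (choice.pickle x)) (Inv_seq (choice.pickle x))) => _ h _.
by apply: h; rewrite choice.pickleK.
Qed.

Lemma perm_ext : exists2 s, automorphism E s & (forall x, Bp x -> s x = p x).
Proof.
pose s x := (seqS (choice.pickle x).+1).1.2 x.
pose t y := (seqS (choice.pickle y).+1).2.2 y.
have agreef x k : ((choice.pickle x).+1 <= k)%N -> (seqS k).1.2 x = s x.
  move=> hk; have [_ _ h _] := ext_seq hk; exact: h (mem_seq x).1.
have agreeg y k : ((choice.pickle y).+1 <= k)%N -> (seqS k).2.2 y = t y.
  move=> hk; have [_ _ _ h] := ext_seq hk; exact: h (mem_seq y).2.
have memX x k : ((choice.pickle x).+1 <= k)%N -> x \in (seqS k).1.1.
  move=> hk; have [h _ _ _] := ext_seq hk; exact: (fsubsetP h) (mem_seq x).1.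
have memY x k : ((choice.pickle x).+1 <= k)%N -> x \in (seqS k).2.1.
  move=> hk; have [_ h _ _] := ext_seq hk; exact: (fsubsetP h) (mem_seq x).2.
exists s; first split.
- exists t => x.
    set M := maxn (choice.pickle x).+1 (choice.pickle (s x)).+1.
    have iM := Inv_seq M.
    rewrite -(agreeg (s x) M) ?leq_maxr // -(agreef x M) ?leq_maxl //.
    exact: (iv1 iM (memX x M (leq_maxl _ _))).2.
  set M := maxn (choice.pickle x).+1 (choice.pickle (t x)).+1.
  have iM := Inv_seq M.
  rewrite -(agreef (t x) M) ?leq_maxr // -(agreeg x M) ?leq_maxl //.
  exact: (iv2 iM (memY x M (leq_maxl _ _))).2.
- move=> x y; set M := maxn (choice.pickle x).+1 (choice.pickle y).+1.
  have iM := Inv_seq M.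
  rewrite -(agreef x M) ?leq_maxl // -(agreef y M) ?leq_maxr //.
  by rewrite (iv5 iM) //; [apply: memX; exact: leq_maxl | apply: memX; exact: leq_maxr].
- move=> x Bx; rewrite /s (iv3 (Inv_seq _)) //; exact: (mem_seq x).1.
Qed.

End Perm2.

End WithB.


Lemma step_ex (B0 : {fset V}) (o : option V) : exists B1 : {fset V}, good B0 ->
  [/\ B0 `<=` B1, good B1 & forall v, o = Some v -> d (v |` B1) = d B1].
Proof.
case: o => [v|]; last by exists B0.
case: (classic (good B0)) => g; last by exists B0.
have [B1 [h1 h2 h3]] := @stage B0 v g.
by exists B1 => _; split => // v' [<-].
Qed.

Definition bnext B0 o := proj1_sig (constructive_indefinite_description _ (step_ex B0 o)).

Lemma bnextP B0 o : good B0 ->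
  [/\ B0 `<=` bnext B0 o, good (bnext B0 o) &
      forall v, o = Some v -> d (v |` bnext B0 o) = d (bnext B0 o)].
Proof. exact: proj2_sig (constructive_indefinite_description _ (step_ex B0 o)). Qed.

Fixpoint Bs n : {fset V} := if n is n'.+1 then bnext (Bs n') (choice.unpickle n') else fset0.

Lemma good0 : good fset0.
Proof.
split; last by rewrite /eN big_seq_fset0.
move=> X _; rewrite /dl /eN big_seq_fset0 cardfs0 muln0 subr0; exact: dl_ge0.
Qed.

Lemma good_Bs n : good (Bs n).
Proof. elim: n => [|n IH] /=; [exact: good0 | by case: (bnextP (choice.unpickle n) IH)]. Qed.

Lemma Bs_mono n k : (n <= k)%N -> Bs n `<=` Bs k.
Proof.
elim: k => [|k IH]; first by rewrite leqn0 => /eqP ->.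
rewrite leq_eqVlt => /orP [/eqP ->|]; first exact: fsubset_refl.
rewrite ltnS => /IH h; apply: fsubset_trans h _ => /=.
by case: (bnextP (choice.unpickle k) (good_Bs k)).
Qed.

Definition Bp0 x := exists n, x \in Bs n.

Lemma hB0 : forall B0 : {fset V}, (forall z, z \in B0 -> Bp0 z) -> good B0.
Proof.
move=> B0 hz.
have [n hn] : exists n, B0 `<=` Bs n.
  elim/fset1U_rect: B0 hz => [|x X _ IH] hz; first by exists 0%N; exact: fsub0set.
  have [n hn] := IH (fun z zX => hz z (fset1Ur x zX)).
  have [k hk] := hz x (fset1U1 x X).
  exists (maxn n k); apply/fsubsetP => y /fset1UP [->|yX].
    by apply: (fsubsetP (Bs_mono (leq_maxr n k))).
  by apply: (fsubsetP (Bs_mono (leq_maxl n k))); apply: (fsubsetP hn).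
exact: good_sub (good_Bs n) hn.
Qed.

Lemma hG0 : forall z, exists A : {fset V}, (forall y, y \in A -> Bp0 y) /\ d (z |` A) = d A.
Proof.
move=> z; exists (Bs (choice.pickle z).+1); split; first by move=> y yB; exists (choice.pickle z).+1.
have [_ _ h] := bnextP (choice.unpickle (choice.pickle z)) (good_Bs (choice.pickle z)).
by apply: h; rewrite choice.pickleK.
Qed.

Lemma dim_is_d (s : seq V) : exists k, dim_is m E s k /\ (k * 2 = d (fs s))%R.
Proof.
have [C [sC hC dC minC]] := dex_cl (fs s).
exists (delta m E C); split; last by rewrite delta2 fs_fset dC.
exists C => //; split; [|split].
- by apply/sub_fs; rewrite fs_fset.
- by apply/closedM_F; rewrite fs_fset.
- move=> C' sC' hC'; apply/sub_fs; rewrite fs_fset; apply: minC.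
    exact/sub_fs.
  exact/closedM_F.
Qed.

Lemma main_thm : exists B : V -> Prop,
    (forall v, in_gcl m E B v) /\
    (forall B0 : seq V, (forall x, x \in B0 -> B x) -> closedM m E B0) /\
    (forall p : V -> V,
        (forall x, B x -> B (p x)) ->
        (forall x y, B x -> B y -> p x = p y -> x = y) ->
        (forall y, B y -> exists2 x, B x & p x = y) ->
        exists2 s, automorphism E s & (forall x, B x -> s x = p x)).
Proof.
exists Bp0; split; [|split].
- move=> v; set n := (choice.pickle v).+1.
  exists (Bs n); split; first by move=> x xB; exists n.
  have [k [hk ek]] := dim_is_d (Bs n).
  have [k' [hk' ek']] := dim_is_d (v :: Bs n).
  exists k, k'; split => //.
  have e1 : fs (v :: Bs n) = v |` Bs n.
    by apply/fsetP => y; rewrite in_fs !inE.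
  have e2 : d (v |` Bs n) = d (Bs n).
    have [_ _ h] := bnextP (choice.unpickle (choice.pickle v)) (good_Bs (choice.pickle v)).
    by apply: h; rewrite choice.pickleK.
  move: ek ek'; rewrite e1 e2 fs_fset; set a := d (Bs n); move=> *; lia.
- move=> B0 hB0'; apply/closedM_F; case: (hB0 (B0 := fs B0) _) => // z.
  by rewrite in_fs; apply: hB0'.
- move=> p hp hinj hsurj.
  have qex y : exists x, Bp0 y -> Bp0 x /\ p x = y.
    case: (classic (Bp0 y)) => hy; last by exists y.
    by have [x hx px] := hsurj y hy; exists x.
  pose q y := proj1_sig (constructive_indefinite_description _ (qex y)).
  have qP y : Bp0 y -> Bp0 (q y) /\ p (q y) = y.
    exact: proj2_sig (constructive_indefinite_description _ (qex y)).
  apply: (perm_ext hB0 hG0 (q := q)) => // x hx.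
  + exact: (qP x hx).1.
  + have [h1 h2] := qP (p x) (hp x hx); exact: hinj.
  + exact: (qP x hx).2.
Qed.

End Main.

Local Close Scope fset_scope.

Theorem lemma8 (m : nat) (hm : (2 <= m)%N) (V : countType) (E : rel V)
    (hM : is_generic m E) :
  exists B : V -> Prop,
    (forall v, in_gcl m E B v) /\
    (forall B0 : seq V, (forall x, x \in B0 -> B x) -> closedM m E B0) /\
    (forall p : V -> V,
        (forall x, B x -> B (p x)) ->
        (forall x y, B x -> B y -> p x = p y -> x = y) ->
        (forall y, B y -> exists2 x, B x & p x = y) ->
        exists2 s, automorphism E s & (forall x, B x -> s x = p x)).
Proof. exact: (@main_thm m V E hm hM). Qed.
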